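(* Let $d\ge 2$, $s\ge1$ and $(\alpha,\beta) \in \mathsf{Brac}_{d,s}$. Then for every $i \in [d]$ with $\beta_i \geq 1-1/s$, $$\sqrt{\alpha_i}\sqrt{s \beta_i - (s-1)} \leq s \sum_{j\in[d],\,j \neq i} \sqrt{\alpha_j \beta_j}.$$
   Context: $[d]=\{1,\dots,d\}$, $\Delta_d=\{\alpha\in\mathbb R^d:\alpha_i\ge0,\ \sum_i\alpha_i=1\}$. For $s\ge1$, $\mathsf{Brac}_{d,s}$ is the set of $(\alpha,\beta)\in\Delta_d^2$ for which there exist $A_1,\dots,A_d,B_1,\dots,B_d\in M_s(\mathbb C)$ with $\sum_i A_iA_i^*=\sum_iB_iB_i^*=I_s$, $\sum_iA_iB_i^*=0$, and $\tfrac1s\|A_i\|_F^2=\alpha_i$, $\tfrac1s\|B_i\|_F^2=\beta_i$ for all $i$, where $\|X\|_F=\operatorname{Tr}(XX^* )^{1/2}$. *)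

(* Defs.v *)
From HB Require Import structures.
From mathcomp Require Import all_boot all_order all_algebra.
From mathcomp Require Import reals complex.
Set Implicit Arguments. Unset Strict Implicit. Unset Printing Implicit Defensive.
Import Order.TTheory GRing.Theory Num.Theory.
Local Open Scope ring_scope.

Definition adjmx (R : realType) (m n : nat) (A : 'M[complex R]_(m, n)) : 'M[complex R]_(n, m) :=
  (map_mx (@conjc R) A)^T.

Definition frob2 (R : realType) (m n : nat) (X : 'M[complex R]_(m, n)) : R :=
  \sum_(j < m) \sum_(k < n) (@complex.Re R (X j k) ^+ 2 + @complex.Im R (X j k) ^+ 2).

Definition simplex (R : realType) (d : nat) (a : 'I_d -> R) : Prop :=
  (forall i, 0 <= a i) /\ \sum_(i < d) a i = 1.

Definition Brac (R : realType) (d s : nat) (alpha beta : 'I_d -> R) : Prop :=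
  simplex alpha /\ simplex beta /\
  exists (A B : 'I_d -> 'M[complex R]_s),
    \sum_(i < d) A i *m adjmx (A i) = 1%:M /\
    \sum_(i < d) B i *m adjmx (B i) = 1%:M /\
    \sum_(i < d) A i *m adjmx (B i) = 0 /\
    (forall i, frob2 (A i) / s%:R = alpha i) /\
    (forall i, frob2 (B i) / s%:R = beta i).

(* Main.v *)
Require Import Defs.
From HB Require Import structures.
From mathcomp Require Import all_boot all_order all_algebra.
From mathcomp Require Import reals complex.
From mathcomp Require Import ring lra.
Import Order.TTheory GRing.Theory Num.Theory.
Set Implicit Arguments. Unset Strict Implicit. Unset Printing Implicit Defensive.
Local Open Scope ring_scope.
Notation cRe := (@complex.Re _).
Notation cIm := (@complex.Im _).
Lemma reconj (R : realType) (x y : R[i]) : cRe (x * conjc y) = cRe x * cRe y + cIm x * cIm y.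
Proof. case: x => a b; case: y => c d /=. ring. Qed.
Lemma imconj (R : realType) (x y : R[i]) : cIm (x * conjc y) = cIm x * cRe y - cRe x * cIm y.
Proof. case: x => a b; case: y => c d /=. ring. Qed.
Lemma ReD (R : realType) (x y : R[i]) : cRe (x + y) = cRe x + cRe y.
Proof. by case: x => a b; case: y => c d /=. Qed.
Lemma Re_sum (R : realType) (I : Type) (r : seq I) (P : pred I) (F : I -> R[i]) :
  cRe (\sum_(i <- r | P i) F i) = \sum_(i <- r | P i) cRe (F i).
Proof. exact: (raddf_sum (@complex.Re R : Rcomplex R -> R)). Qed.

Section Frob.
Variable R : realType.
Local Notation C := R[i].

Definition ip m n (X Y : 'M[C]_(m,n)) : R := \sum_j \sum_k cRe (X j k * conjc (Y j k)).

Lemma frob2_ip m n (X : 'M[C]_(m,n)) : frob2 X = ip X X.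
Proof. rewrite /frob2 /ip; apply eq_bigr => j _; apply eq_bigr => k _; rewrite reconj; ring. Qed.

Lemma frob2_ge0 m n (X : 'M[C]_(m,n)) : 0 <= frob2 X.
Proof. apply: sumr_ge0 => j _; apply: sumr_ge0 => k _; apply: addr_ge0; exact: sqr_ge0. Qed.

Lemma quad (F S G : R) : 0 <= G -> (forall t, 0 <= F - 2*t*S + t^+2*G) -> S^+2 <= F*G.
Proof.
move=> G0 H; have [Gz|Gne] := eqVneq G 0.
  rewrite Gz mulr0.
  have [->|Sne] := eqVneq S 0; first by rewrite expr2 !mulr0.
  have := H ((F+1)/(2*S)); rewrite Gz mulr0 addr0.
  have -> : 2 * ((F + 1) / (2 * S)) * S = F + 1 by field; rewrite Sne.
  lra.
have Gp : 0 < G by rewrite lt_def Gne G0.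
have := H (S/G).
have -> : F - 2 * (S / G) * S + (S / G) ^+ 2 * G = (F*G - S^+2)/G by field; rewrite Gne.
move=> h; have : 0 <= (F*G - S^+2)/G * G by apply: mulr_ge0 => //; exact: ltW.
rewrite divfK //; lra.
Qed.

Lemma CS m n (X Y : 'M[C]_(m,n)) : ip X Y ^+ 2 <= frob2 X * frob2 Y.
Proof.
apply: quad; first exact: frob2_ge0.
move=> t.
have -> : frob2 X - 2 * t * ip X Y + t ^+ 2 * frob2 Y =
  \sum_j \sum_k ((cRe (X j k) - t * cRe (Y j k))^+2 + (cIm (X j k) - t * cIm (Y j k))^+2).
  rewrite /frob2 /ip !mulr_sumr -sumrB -big_split; apply eq_bigr => j _.
  rewrite !mulr_sumr -sumrB -big_split; apply eq_bigr => k _.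
  rewrite reconj /=; ring.
apply: sumr_ge0 => j _; apply: sumr_ge0 => k _; apply: addr_ge0; exact: sqr_ge0.
Qed.

End Frob.

Section Frob2.
Variable R : realType.
Local Notation C := R[i].

Lemma adjE m n (X : 'M[C]_(m,n)) i j : adjmx X i j = conjc (X j i).
Proof. by rewrite /adjmx !mxE. Qed.

Lemma ip_tr m n (X Y : 'M[C]_(m,n)) : ip X Y = cRe (\tr (X *m adjmx Y)).
Proof.
rewrite /mxtrace; transitivity (\sum_i cRe ((X *m adjmx Y) i i)); last by symmetry; apply: Re_sum.
apply eq_bigr => j _; rewrite mxE.
transitivity (\sum_k cRe (X j k * adjmx Y k j)); last by symmetry; apply: Re_sum.
by apply eq_bigr => k _; rewrite adjE.
Qed.

Lemma ip_suml m n (I : Type) (r : seq I) (P : pred I) (Y : I -> 'M[C]_(m,n)) Z :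
  ip (\sum_(j <- r | P j) Y j) Z = \sum_(j <- r | P j) ip (Y j) Z.
Proof.
rewrite ip_tr mulmx_suml (raddf_sum (@mxtrace _ m)) raddf_sum.
by apply eq_bigr => j _; rewrite ip_tr.
Qed.

Lemma adjmx_mul m n p (X : 'M[C]_(m,n)) (Y : 'M[C]_(n,p)) :
  adjmx (X *m Y) = adjmx Y *m adjmx X.
Proof.
apply/matrixP => i j; rewrite adjE !mxE rmorph_sum; apply eq_bigr => k _.
by rewrite !adjE rmorphM mulrC.
Qed.

Lemma adjmxK m n (X : 'M[C]_(m,n)) : adjmx (adjmx X) = X.
Proof. by apply/matrixP => i j; rewrite !adjE conjcK. Qed.

Lemma frob2_adj m n (X : 'M[C]_(m,n)) : frob2 (adjmx X) = frob2 X.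
Proof.
rewrite /frob2 exchange_big; apply eq_bigr => j _; apply eq_bigr => k _.
rewrite adjE; case: (X _ _) => a b /=; by rewrite sqrrN.
Qed.

Lemma frob2_rows m n (X : 'M[C]_(m,n)) : frob2 X = \sum_j frob2 (row j X).
Proof.
rewrite /frob2; apply eq_bigr => j _; rewrite big_ord1; apply eq_bigr => k _.
by rewrite !mxE.
Qed.

Lemma frob2N m n (X : 'M[C]_(m,n)) : frob2 (- X) = frob2 X.
Proof.
rewrite /frob2; apply eq_bigr => j _; apply eq_bigr => k _.
rewrite mxE; case: (X j k) => a b /=; by rewrite !sqrrN.
Qed.

Lemma normM2 (x y : C) : cRe (x*y)^+2 + cIm (x*y)^+2 = (cRe x^+2 + cIm x^+2) * (cRe y^+2 + cIm y^+2).
Proof. case: x => a b; case: y => c d /=; ring. Qed.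

Lemma vecCS n (u v : 'rV[C]_n) :
  cRe ((u *m adjmx v) 0 0) ^+ 2 + cIm ((u *m adjmx v) 0 0) ^+ 2 <= frob2 u * frob2 v.
Proof.
set w := (u *m adjmx v) 0 0; set N := cRe w ^+ 2 + cIm w ^+ 2.
have wE : w = \sum_k u 0 k * conjc (v 0 k).
  by rewrite /w mxE; apply eq_bigr => k _; rewrite adjE.
have h1 : ip u (w *: v) = N.
  rewrite /ip big_ord1.
  have -> : N = cRe ((\sum_k u 0 k * conjc (v 0 k)) * conjc w).
    by rewrite -wE reconj /N; ring.
  rewrite mulr_suml Re_sum; apply eq_bigr => k _.
  rewrite mxE rmorphM /=; congr (cRe _); ring.
have h2 : frob2 (w *: v) = N * frob2 v.
  rewrite /frob2 mulr_sumr; apply eq_bigr => j _; rewrite mulr_sumr; apply eq_bigr => k _.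
  by rewrite mxE normM2.
have := CS u (w *: v); rewrite h1 h2.
have N0 : 0 <= N by apply: addr_ge0; exact: sqr_ge0.
have := frob2_ge0 u; have := frob2_ge0 v.
move=> v0 u0 h; have [->|Nne] := eqVneq N 0; first exact: mulr_ge0.
have Np : 0 < N by rewrite lt_def Nne N0.
have : N * N <= N * (frob2 u * frob2 v) by rewrite -expr2 mulrCA.
by rewrite ler_pM2l.
Qed.

Lemma L2 p q n (X : 'M[C]_(p,n)) (Y : 'M[C]_(q,n)) :
  frob2 (X *m adjmx Y) <= frob2 X * frob2 Y.
Proof.
rewrite (frob2_rows X) (frob2_rows Y) big_distrlr /=.
rewrite /frob2 ler_sum // => j _; apply ler_sum => l _.
have -> : (X *m adjmx Y) j l = (row j X *m adjmx (row l Y)) 0 0.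
  rewrite !mxE; apply eq_bigr => k _; by rewrite !adjE !mxE.
exact: vecCS.
Qed.

Lemma ip_le m n (X Y : 'M[C]_(m,n)) : ip X Y <= Num.sqrt (frob2 X) * Num.sqrt (frob2 Y).
Proof.
rewrite -sqrtrM ?frob2_ge0 //.
apply: le_trans (ler_norm _) _; rewrite -sqrtr_sqr; apply: ler_wsqrtr; exact: CS.
Qed.

Lemma frob_tri m n (I : Type) (r : seq I) (P : pred I) (Y : I -> 'M[C]_(m,n)) :
  Num.sqrt (frob2 (\sum_(j <- r | P j) Y j)) <= \sum_(j <- r | P j) Num.sqrt (frob2 (Y j)).
Proof.
set Z := \sum_(j <- r | P j) Y j.
have h : frob2 Z <= (\sum_(j <- r | P j) Num.sqrt (frob2 (Y j))) * Num.sqrt (frob2 Z).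
  rewrite {1}frob2_ip {1}/Z ip_suml mulr_suml; apply: ler_sum => j _; exact: ip_le.
have S0 : 0 <= \sum_(j <- r | P j) Num.sqrt (frob2 (Y j)) by apply: sumr_ge0 => j _; exact: sqrtr_ge0.
have q0 := sqrtr_ge0 (frob2 Z).
move: h; rewrite -{1}(sqr_sqrtr (frob2_ge0 Z)); nra.
Qed.

End Frob2.

Section Step3.
Variable R : realType.
Local Notation C := R[i].

Lemma frob2_0 m n : frob2 (0 : 'M[C]_(m,n)) = 0.
Proof. rewrite /frob2 big1 // => j _; rewrite big1 // => k _; rewrite mxE /=; by rewrite expr2 mulr0 addr0. Qed.

Lemma frob2_eq0 m n (X : 'M[C]_(m,n)) : frob2 X = 0 -> X = 0.
Proof.
have H0 : forall j : 'I_m, true -> 0 <= \sum_k (cRe (X j k) ^+ 2 + cIm (X j k) ^+ 2).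
  move=> j _; apply: sumr_ge0 => k _; apply: addr_ge0; exact: sqr_ge0.
move=> /(psumr_eq0P H0) h; apply/matrixP => j k; rewrite mxE.
have H1 : forall k : 'I_n, true -> 0 <= cRe (X j k) ^+ 2 + cIm (X j k) ^+ 2.
  by move=> k' _; apply: addr_ge0; exact: sqr_ge0.
have /(psumr_eq0P H1) := h j isT.
move=> /(_ k isT); case: (X j k) => a b /= hab.
have a0 : a = 0 by apply/eqP; rewrite -sqrf_eq0; apply/eqP; move: (sqr_ge0 a) (sqr_ge0 b); lra.
have b0 : b = 0 by apply/eqP; rewrite -sqrf_eq0; apply/eqP; move: (sqr_ge0 a) (sqr_ge0 b); lra.
by rewrite a0 b0.
Qed.

Variables (d s : nat) (B : 'I_d -> 'M[C]_s).
Hypothesis HB : \sum_(j < d) B j *m adjmx (B j) = 1%:M.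

Lemma rowsum (u : 'rV[C]_s) : frob2 u = \sum_j frob2 (u *m B j).
Proof.
rewrite frob2_ip ip_tr -{1}(mulmx1 u) -HB mulmx_sumr mulmx_suml (raddf_sum (@mxtrace _ 1)) raddf_sum.
apply eq_bigr => j _; by rewrite frob2_ip ip_tr adjmx_mul !mulmxA.
Qed.

Lemma frob2_mul (u : 'rV[C]_s) j : frob2 (u *m B j) <= frob2 u * frob2 (B j).
Proof. by rewrite -{1}(adjmxK (B j)) -(frob2_adj (B j)); exact: L2. Qed.

Lemma lowB i (u : 'rV[C]_s) :
  (1 - \sum_(j | j != i) frob2 (B j)) * frob2 u <= frob2 (u *m B i).
Proof.
have := rowsum u; rewrite (bigD1 i) //= => e.
have : \sum_(j | j != i) frob2 (u *m B j) <= frob2 u * \sum_(j | j != i) frob2 (B j).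
  rewrite mulr_sumr; apply: ler_sum => j _; exact: frob2_mul.
lra.
Qed.

Lemma upper i (c : R) : 0 < c ->
  (forall u : 'rV[C]_s, c * frob2 u <= frob2 (u *m B i)) ->
  forall z : 'rV[C]_s, c * frob2 z <= frob2 (z *m adjmx (B i)).
Proof.
move=> c0 hl z.
have U : B i \in unitmx.
  rewrite unitmxE unitfE; apply/negP => /det0P [v vn0 vB].
  have := hl v; rewrite vB frob2_0 => h.
  have : frob2 v = 0 by move: (frob2_ge0 v); nra.
  by move=> /frob2_eq0 v0; move: vn0; rewrite v0 eqxx.
set u := z *m invmx (B i).
have uB : u *m B i = z by rewrite /u mulmxKV.
have e : frob2 z = ip u (z *m adjmx (B i)).
  by rewrite frob2_ip !ip_tr adjmx_mul adjmxK mulmxA uB.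
have h1 := CS u (z *m adjmx (B i)); rewrite -e in h1.
have h2 := hl u; rewrite uB in h2.
have F0 := frob2_ge0 z; have G0 := frob2_ge0 (z *m adjmx (B i)); have U0 := frob2_ge0 u.
have [Fz|Fn] := eqVneq (frob2 z) 0; first by rewrite Fz mulr0.
have Fp : 0 < frob2 z by rewrite lt_def Fn F0.
have : frob2 z * (c * frob2 z) <= frob2 z * frob2 (z *m adjmx (B i)).
  apply: le_trans (_ : c * (frob2 u * frob2 (z *m adjmx (B i))) <= _).
    rewrite mulrCA -expr2; apply: ler_wpM2l => //; exact: ltW.
  rewrite mulrA; apply: ler_wpM2r => //.
by rewrite ler_pM2l.
Qed.

Lemma lowAB i (c : R) : 0 < c ->
  (forall u : 'rV[C]_s, c * frob2 u <= frob2 (u *m B i)) ->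
  forall m (A : 'M[C]_(m, s)), c * frob2 A <= frob2 (A *m adjmx (B i)).
Proof.
move=> c0 hl m A; rewrite (frob2_rows A) (frob2_rows (A *m _)) mulr_sumr.
apply: ler_sum => j _; rewrite row_mul; exact: upper.
Qed.

End Step3.

Theorem proposition3p7 (R : realType) (d s : nat) (alpha beta : 'I_d -> R) :
  (2 <= d)%N -> (1 <= s)%N -> Brac s alpha beta ->
  forall i : 'I_d, 1 - 1 / s%:R <= beta i ->
    Num.sqrt (alpha i) * Num.sqrt (s%:R * beta i - (s%:R - 1))
      <= s%:R * \sum_(j < d | j != i) Num.sqrt (alpha j * beta j).
Proof.
move=> _ s1 [[a0 asum] [[b0 bsum] [A [B [HA [HB [HAB [Ha Hb]]]]]]]] i hb.
have sp : 0 < s%:R :> R by rewrite ltr0n.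
have s1R : 1 <= s%:R :> R by rewrite ler1n.
have sne : s%:R != 0 :> R by rewrite gt_eqF.
have FA j : frob2 (A j) = s%:R * alpha j by rewrite -Ha mulrC divfK.
have FB j : frob2 (B j) = s%:R * beta j by rewrite -Hb mulrC divfK.
set c := s%:R * beta i - (s%:R - 1).
have c0 : 0 <= c.
  rewrite /c subr_ge0; have := ler_wpM2l (ltW sp) hb.
  by rewrite mulrBr mulr1 mulrC divfK // mulrC.
have RHS0 : 0 <= s%:R * \sum_(j < d | j != i) Num.sqrt (alpha j * beta j).
  by apply: mulr_ge0; [exact: ltW | apply: sumr_ge0 => j _; exact: sqrtr_ge0].
have [cz|cn] := eqVneq c 0; first by rewrite cz sqrtr0 mulr0.
have cp : 0 < c by rewrite lt_def cn c0.
have ce : 1 - \sum_(j | j != i) frob2 (B j) = c.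
  have : \sum_(j | j != i) beta j = 1 - beta i.
    by move: bsum; rewrite (bigD1 i) //= => e; rewrite -e addrC addrK.
  move=> e; rewrite (eq_bigr _ (fun j _ => FB j)) -mulr_sumr e /c; ring.
have hl : forall u : 'rV_s, c * frob2 u <= frob2 (u *m B i).
  by move=> u; rewrite -ce; exact: lowB.
have h1 := lowAB cp hl (A i).
have eAB : A i *m adjmx (B i) = - \sum_(j | j != i) A j *m adjmx (B j).
  by apply/eqP; rewrite -addr_eq0 -(bigD1 i (P := xpredT)) //= HAB.
rewrite eAB frob2N in h1.
have h2 := frob_tri (index_enum 'I_d) (fun j => j != i) (fun j => A j *m adjmx (B j)).
have h3 : \sum_(j | j != i) Num.sqrt (frob2 (A j *m adjmx (B j))) <=
          s%:R * \sum_(j < d | j != i) Num.sqrt (alpha j * beta j).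
  rewrite mulr_sumr; apply: ler_sum => j _.
  apply: le_trans (ler_wsqrtr (L2 (A j) (B j))) _.
  rewrite FA FB.
  have -> : s%:R * alpha j * (s%:R * beta j) = s%:R ^+ 2 * (alpha j * beta j) by ring.
  by rewrite sqrtrM ?sqr_ge0 // sqrtr_sqr ger0_norm // ltW.
apply: le_trans h3; apply: le_trans h2.
rewrite -sqrtrM ?a0 //; apply: ler_wsqrtr; apply: le_trans h1.
rewrite FA -subr_ge0.
have -> : c * (s%:R * alpha i) - alpha i * c = (s%:R - 1) * (alpha i * c) by ring.
apply: mulr_ge0; first by rewrite subr_ge0.
exact: mulr_ge0 (a0 i) c0.
Qed.
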